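(* Let $U\subset\mathbb{C}\setminus\{0\}$ be a (connected) domain on which an analytic branch of $\ln x$ is fixed, and let $f$ be a nowhere-vanishing complex-differentiable function on $U$. Then $\mathcal{A}[f]=f$ on $U$ if and only if there is a constant $a\in\mathbb{C}$ with $a-\ln x\neq 0$ on $U$ such that \[ f(x)=\frac{1}{a-\ln x}\qquad (x\in U). \]
   Context: For a complex-differentiable, nowhere-vanishing function $f$ on a domain $U\subset\mathbb{C}\setminus\{0\}$, the dual logarithmic derivative operator is $\mathcal{A}[f](x)=\dfrac{\mathrm{d}\ln f(x)}{\mathrm{d}\ln x}=\dfrac{x f'(x)}{f(x)}$ (for fixed analytic branches of the logarithms). A function $f$ with $\mathcal{A}[f]=f$ is called a fixed point of $\mathcal{A}$. *)

(* Defs.v *)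
(* R[i]^o is R[i] viewed as a normed module
   over itself, so that [derivable f x 1] is complex differentiability. *)
From mathcomp Require Import all_boot all_order all_algebra.
From mathcomp Require Import complex.
From mathcomp Require Import all_classical all_reals all_analysis.
Import Order.TTheory GRing.Theory Num.Theory.
Import numFieldNormedType.Exports.

Set Implicit Arguments.
Unset Strict Implicit.
Unset Printing Implicit Defensive.

Local Open Scope ring_scope.
Local Open Scope complex_scope.

Definition cexp (R : realType) (z : R[i]) : R[i] :=
  (expR (complex.Re z) * cos (complex.Im z)) +i*
  (expR (complex.Re z) * sin (complex.Im z)).

Definition cdiff (R : realType) (f : R[i]^o -> R[i]^o) (x : R[i]) : Prop :=
  derivable f x 1.

Definition cdomain (R : realType) (U : set R[i]^o) : Prop :=
  open U /\ connected U /\ (U !=set0)%classic.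

Definition log_branch (R : realType) (U : set R[i]^o) (L : R[i]^o -> R[i]^o) : Prop :=
  (forall x, U x -> cdiff L x) /\ (forall x, U x -> cexp (L x) = x).

(* dual logarithmic derivative  A[f](x) = x f'(x) / f(x) *)
Definition dual_logderiv (R : realType) (f : R[i]^o -> R[i]^o) (x : R[i]) : R[i] :=
  x * derive1 f x / f x.

(* Main.v *)
Set Warnings "-all".
Require Import Defs.
From mathcomp Require Import all_boot all_order all_algebra.
From mathcomp Require Import complex.
From mathcomp Require Import all_classical all_reals all_analysis.
From mathcomp Require Import ring lra.
Import Order.TTheory GRing.Theory Num.Theory.
Import numFieldNormedType.Exports.
Local Open Scope ring_scope.
Local Open Scope complex_scope.
Lemma cexpD (R : realType) (u v : R[i]) : cexp (u + v) = cexp u * cexp v.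
Proof.
case: u => a b; case: v => c d; rewrite /cexp /= expRD cosD sinD.
apply/eqP; rewrite eq_complex /=; apply/andP; split; apply/eqP; ring.
Qed.

Lemma cexp0 (R : realType) : cexp (0 : R[i]) = 1.
Proof. by rewrite /cexp /= expR0 cos0 sin0 mulr1 mulr0. Qed.

Lemma der_eps (K : numFieldType) (f : K^o -> K^o) x : derivable f x 1 ->
  forall e : K, 0 < e -> exists2 d : K, 0 < d &
  forall t, `|t| < d -> `|f (x + t) - f x - t * 'D_1 f x| <= e * `|t|.
Proof.
move=> df e e0.
have := df; rewrite /derivable => /cvgrPdist_le /(_ e e0).
rewrite near_withinE => /nbhs_norm0P [d d0 Hd]; exists d => // t td.
have [->|t0] := eqVneq t 0.
  by rewrite addr0 subrr mul0r subrr !normr0 mulr0.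
have := Hd t td t0; rewrite /= /derive.
set D := lim _ => H.
have -> : f (x + t) - f x - t * D = t *: (t^-1 *: (f (t%:A + x) - f x) - D).
  rewrite [t%:A]mulr1 scalerBr scalerA mulfV // scale1r addrC.
  by rewrite (addrC t x) addrC.
by rewrite normrZ mulrC ler_wpM2r // distrC.
Qed.
Section Est.
Variable R : realType.

Lemma nc_le (u v : R) : Num.sqrt (u^+2 + v^+2) <= `|u| + `|v|.
Proof.
rewrite -[X in _ <= X]ger0_norm ?addr_ge0 // -sqrtr_sqr ler_wsqrtr //.
rewrite -[u^+2]real_normK ?num_real // -[v^+2]real_normK ?num_real //.
have := normr_ge0 u; have := normr_ge0 v; nra.
Qed.

Lemma nc_geRe (u v : R) : `|u| <= Num.sqrt (u^+2 + v^+2).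
Proof. by rewrite -sqrtr_sqr ler_wsqrtr // lerDl sqr_ge0. Qed.

Lemma nc_geIm (u v : R) : `|v| <= Num.sqrt (u^+2 + v^+2).
Proof. by rewrite addrC nc_geRe. Qed.

Lemma real_est (f : R^o -> R^o) (d : R) : is_derive (0 : R^o) (1 : R^o) f d ->
  forall e : R, 0 < e -> exists2 del : R, 0 < del &
  forall t, `|t| < del -> `|f t - f 0 - t * d| <= e * `|t|.
Proof.
move=> [df <-] e e0; have [del del0 H] := @der_eps R f 0 df e e0.
by exists del => // t /H; rewrite add0r.
Qed.


Lemma dexp0 : is_derive (0 : R^o) (1 : R^o) expR 1.
Proof. by have := is_derive_expR (0:R); rewrite expR0. Qed.
Lemma dsin0 : is_derive (0 : R^o) (1 : R^o) sin 1.
Proof. by have := is_derive_sin (0:R); rewrite cos0. Qed.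
Lemma dcos0 : is_derive (0 : R^o) (1 : R^o) cos 0.
Proof. by have := is_derive_cos (0:R); rewrite sin0 oppr0. Qed.

Lemma cexp_est_real (e : R) : 0 < e -> exists2 d : R, 0 < d &
  forall a b : R, Num.sqrt (a^+2 + b^+2) < d ->
  Num.sqrt ((expR a * cos b - 1 - a)^+2 + (expR a * sin b - b)^+2)
   <= e * Num.sqrt (a^+2 + b^+2).
Proof.
move=> e0.
pose e1 := Num.min (e / 6) 1.
have e10 : 0 < e1 by rewrite lt_min ltr01 andbT divr_gt0.
have e11 : e1 <= 1 by rewrite ge_min lexx orbT.
have e16 : e1 <= e / 6 by rewrite ge_min lexx.
have [dE dE0 HE] := @real_est _ _ dexp0 e1 e10.
have [dS dS0 HS] := @real_est _ _ dsin0 e1 e10.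
have [dC dC0 HC] := @real_est _ _ dcos0 e1 e10.
exists (Num.min (Num.min dE dS) (Num.min dC (e1 / 4))).
  by rewrite !lt_min dE0 dS0 dC0 divr_gt0.
move=> a b; set n := Num.sqrt _ => hn.
have ha := nc_geRe a b; have hb := nc_geIm a b; rewrite -/n in ha hb.
move: hn; rewrite !lt_min => /andP[/andP[hE hS] /andP[hC hq]].
have := HE a (le_lt_trans ha hE); rewrite expR0 mulr1.
have := HS b (le_lt_trans hb hS); rewrite sin0 mulr1 subr0.
have := HC b (le_lt_trans hb hC); rewrite cos0 mulr0 subr0.
set A := expR a - 1 - a; set S := sin b - b; set Cc := cos b - 1 => hCc hSS hA.
have -> : expR a * cos b - 1 - a = A * (1 + Cc) + (1 + a) * Cc.
  rewrite /A /Cc; ring.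
have -> : expR a * sin b - b = S + (a + A) * (b + S).
  rewrite /A /S; ring.
apply: (le_trans (nc_le _ _)).
have pa : `|a| <= e1 / 4 by apply: ltW; apply: le_lt_trans ha hq.
have pb : `|b| <= e1 / 4 by apply: ltW; apply: le_lt_trans hb hq.
have r1 : `|A * (1 + Cc) + (1 + a) * Cc| <= 2 * e1 * `|a| + 2 * e1 * `|b|.
  apply: (le_trans (ler_normD _ _)); rewrite !normrM.
  have h1 : `|1 + Cc| <= 1 + `|Cc| by apply: (le_trans (ler_normD _ _)); rewrite normr1.
  have h2 : `|1 + a| <= 1 + `|a| by apply: (le_trans (ler_normD _ _)); rewrite normr1.
  have h3 : `|1 + Cc| <= 2.
    apply: (le_trans h1); have := normr_ge0 b; nra.
  have h4 : `|1 + a| <= 2.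
    apply: (le_trans h2); have := normr_ge0 a; nra.
  have h5 : `|A| * `|1 + Cc| <= e1 * `|a| * 2 by apply: ler_pM.
  have h6 : `|1 + a| * `|Cc| <= 2 * (e1 * `|b|) by apply: ler_pM.
  lra.
have r2 : `|S + (a + A) * (b + S)| <= 2 * e1 * `|b|.
  apply: (le_trans (ler_normD _ _)); rewrite !normrM.
  have h1 : `|a + A| <= `|a| + `|A| by exact: ler_normD.
  have h2 : `|b + S| <= `|b| + `|S| by exact: ler_normD.
  have h3 : `|a + A| <= e1 / 2.
    apply: (le_trans h1); have := normr_ge0 a; nra.
  have h4 : `|b + S| <= 2 * `|b|.
    apply: (le_trans h2); have := normr_ge0 b; nra.
  have h5 : `|a + A| * `|b + S| <= e1 / 2 * (2 * `|b|) by apply: ler_pM.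
  lra.
have := normr_ge0 a; have := normr_ge0 b.
nra.
Qed.

End Est.
Definition Ef (R : realType) (k : R[i]^o) : R[i]^o :=
  if k == 0 then 1 else (cexp k - 1) / k.
Arguments Ef {R}.

Lemma Ef_cont (R : realType) : (Ef k @[k --> (0 : R[i]^o)] --> (1 : R[i]^o))%classic.
Proof.
apply/(@cvgrPdist_le _ _ _ (nbhs (0 : R[i]^o)) (nbhs_filter _)) => -[er ei]; rewrite ltcE /= => /andP[/eqP -> er0].
have [d d0 Hd] := @cexp_est_real _ er er0.
rewrite !near_simpl; apply/nbhs_norm0P; exists d%:C; first by rewrite /= ltcR.
move=> k /=; rewrite /Ef; have [->|k0] := eqVneq k 0.
  by move=> _; rewrite subrr normr0 ltW // ltcR.
move=> hk.
have nk : 0 < `|k| by rewrite normr_gt0.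
have -> : 1 - (cexp k - 1) / k = - ((cexp k - 1 - k) / k).
  by field.
rewrite normrN normrM normfV ler_pdivrMr //.
move: hk; case: k k0 nk => a b _ _.
rewrite /cexp !normc_def /= ltcR => /Hd.
by rewrite subr0 complexr0 -rmorphM lecR.
Qed.

Lemma EfM (R : realType) (k : R[i]^o) : Ef k * k = cexp k - 1.
Proof.
rewrite /Ef; have [->|k0] := eqVneq k 0; first by rewrite mulr0 cexp0 subrr.
by rewrite divfK.
Qed.

Lemma dL (R : realType) (L : R[i]^o -> R[i]^o) (x : R[i]^o) (r : R[i]) :
  derivable L x 1 -> 0 < r -> (forall y, `|y - x| < r -> cexp (L y) = y) ->
  x * 'D_1 L x = 1.
Proof.
move=> df r0 Hr.
set q := fun h : R[i]^o => h^-1 *: ((L \o shift x) (h *: 1) - L x).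
have qc : (q h @[h --> (0 : R[i]^o)^'] --> 'D_1 L x)%classic := df.
set k := fun h : R[i]^o => L (h + x) - L x.
have kc : (k h @[h --> (0 : R[i]^o)^'] --> (0 : R[i]^o))%classic.
  have c0 : ((fun h : R[i]^o => h) @ (0 : R[i]^o)^' --> (0 : R[i]^o))%classic by apply: cvg_within.
  have H : ((fun h : R[i]^o => h * q h) @ (0 : R[i]^o)^' --> (0 : R[i]^o))%classic.
    have := @cvgM (R[i]) (R[i]^o) (dnbhs (0:R[i]^o)) _ (fun h => h) q 0 ('D_1 L x) c0 qc.
    by rewrite mul0r; apply; exact _.
  apply: (cvg_trans _ H).
  apply: near_eq_cvg.
  rewrite near_withinE !near_simpl; apply/nbhs_norm0P; exists 1; first exact: ltr01. move=> h /= _ h0.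
  rewrite /q /k /= [h%:A]mulr1 /GRing.scale /= mulrA mulfV // mul1r.
  done.
have kq : forall h, h != 0 -> k h = h * q h.
  move=> h h0; rewrite /q /k /= [h%:A]mulr1 /GRing.scale /= mulrA mulfV // mul1r.
  done.
have Ec : ((Ef \o k) h @[h --> (0 : R[i]^o)^'] --> (1 : R[i]^o))%classic.
  exact: (cvg_comp _ _ kc (Ef_cont R)).
have H1 : ((fun h => x * Ef (k h)) @ (0 : R[i]^o)^' --> x * 1)%classic.
  have := @cvgM (R[i]) (R[i]^o) (dnbhs (0:R[i]^o)) _ (fun h => x) (Ef \o k) x 1 (cvg_cst _) Ec.
  by apply; exact _.
have H2 : ((fun h => x * Ef (k h) * q h) @ (0 : R[i]^o)^' --> x * 1 * 'D_1 L x)%classic.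
  have := @cvgM (R[i]) (R[i]^o) (dnbhs (0:R[i]^o)) _ (fun h => x * Ef (k h)) q (x * 1) ('D_1 L x) H1 qc.
  by apply; exact _.
have H3 : ((fun h : R[i]^o => (1 : R[i]^o)) @ (0 : R[i]^o)^' --> x * 1 * 'D_1 L x)%classic.
  apply: (cvg_trans _ H2); apply: near_eq_cvg.
  rewrite near_withinE !near_simpl; apply/nbhs_norm0P; exists r => // h /= hr h0.
  have e1 : cexp (L (h + x)) = h + x by apply: Hr; rewrite addrK.
  have e2 : cexp (L x) = x by apply: Hr; rewrite subrr normr0.
  have e3 : L (h + x) = L x + k h by rewrite /k [RHS]addrC subrK.
  apply: (mulfI h0); rewrite mulr1 mulrCA -kq // -mulrA EfM.
  rewrite mulrBr mulr1 -e2 -cexpD -e3 e1 e2.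
  by rewrite addrK.
have := cvg_lim (@norm_hausdorff _ _) H3.
rewrite lim_cst ?mulr1; last exact: norm_hausdorff.
move=> H; symmetry; apply: H.
Qed.

Lemma is_derive_of_cvg (K : numFieldType) (f : K^o -> K^o) (t l : K^o) :
  ((fun s => s^-1 *: ((f \o shift t) (s *: 1) - f t)) @ (0 : K^o)^' --> l)%classic ->
  is_derive t 1 f l.
Proof.
move=> H; have Hl : 'D_1 f t = l.
  have := cvg_lim (@norm_hausdorff _ _) H; apply.
apply: DeriveDef => //; exact: cvgP H.
Qed.

Lemma pos_real (R : realType) (q : R[i]) : 0 < q -> (complex.Re q)%:C = q /\ 0 < complex.Re q.
Proof. by case: q => a b; rewrite ltcE /= => /andP[/eqP -> ->]. Qed.

Lemma psi_der (R : realType) (h : R[i]^o -> R[i]^o) (p : R[i] -> R) (z c : R[i]^o) (t : R) :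
  (forall u v, p (u - v) = p u - p v) -> (forall u, (`|p u|)%:C <= `|u|) ->
  derivable h (z + t%:C * c) 1 -> 'D_1 h (z + t%:C * c) = 0 ->
  is_derive (t : R^o) (1 : R^o) (fun s : R^o => p (h (z + s%:C * c))) (0 : R^o).
Proof.
move=> pB pN dh Dh; apply: is_derive_of_cvg.
apply/cvgrPdist_le => e e0.
set w := z + t%:C * c.
have key : exists2 del : R, 0 < del & forall s : R, `|s| < del ->
    `|p (h (w + s%:C * c)) - p (h w)| <= e * `|s|.
  have [->|c0] := eqVneq c 0.
    exists 1 => // s _; rewrite mulr0 addr0 -pB subrr.
    have := pN 0; rewrite normr0 lecR normr_le0 => /eqP ->.
    by rewrite normr0 mulr_ge0 // ltW.
  have nc0 : 0 < `|c| by rewrite normr_gt0.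
  have E0 : 0 < e%:C / `|c| by rewrite divr_gt0 // ltcR.
  have [d d0 Hd] := @der_eps _ _ _ dh _ E0.
  have [dr dr0] := @pos_real _ _ (divr_gt0 d0 nc0).
  exists (complex.Re (d / `|c|)) => // s hs.
  rewrite -pB -lecR; apply: (le_trans (pN _)).
  have hs' : `|s%:C * c| < d.
    rewrite normrM -ltr_pdivlMr // -dr.
    suff -> : `|s%:C| = (`|s|)%:C by rewrite ltcR.
    by rewrite normc_def /= expr0n /= addr0 sqrtr_sqr.
  have := Hd _ hs'; rewrite Dh mulr0 subr0 => /le_trans; apply.
  rewrite normrM mulrCA divfK ?gt_eqF //.
  suff -> : `|s%:C| = (`|s|)%:C by rewrite -rmorphM mulrC.
  by rewrite normc_def /= expr0n /= addr0 sqrtr_sqr.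
case: key => del del0 Hk.
rewrite near_withinE !near_simpl; apply/nbhs_norm0P; exists del => // s /= hs s0.
have -> : z + (s%:A + t)%:C * c = w + s%:C * c.
  by rewrite [s%:A]mulr1 rmorphD mulrDl /w addrAC addrA.
rewrite sub0r normrN normrZ normfV ler_pdivrMl ?normr_gt0 // [X in _ <= X]mulrC.
exact: Hk.
Qed.

Lemma normC_real (R : realType) (s : R) : `|s%:C| = (`|s|)%:C.
Proof. by rewrite normc_def /= expr0n /= addr0 sqrtr_sqr. Qed.

Lemma loc_cst (R : realType) (h : R[i]^o -> R[i]^o) (z : R[i]^o) (r : R[i]) :
  0 < r -> (forall w, `|w - z| < r -> derivable h w 1 /\ 'D_1 h w = 0) ->
  forall y, `|y - z| < r / 2%:R -> h y = h z.
Proof.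
move=> r0 Hd y hy; set c := y - z.
have Hp : forall p : R[i] -> R, (forall u v, p (u - v) = p u - p v) ->
    (forall u, (`|p u|)%:C <= `|u|) -> p (h y) = p (h z).
  move=> p pB pN.
  have one2 : (1:R) < 2 by rewrite ltr1n.
  set psi := fun s : R^o => p (h (z + s%:C * c)).
  have der : forall t : R, `|t| < 2 -> is_derive (t : R^o) (1 : R^o) psi (0 : R^o).
    move=> t ht.
    have hw : `|z + t%:C * c - z| < r.
      rewrite addrC addKr normrM normC_real.
      have -> : r = 2%:R * (r / 2%:R) by rewrite mulrC divfK // pnatr_eq0.
      have [->|cn0] := eqVneq `|c| 0; first by rewrite mulr0 mulrC divfK // pnatr_eq0.
      apply: ltr_pM => //.
        by rewrite ler0c.
      have -> : (2%:R : R[i]) = (2%:R : R)%:C by rewrite rmorph_nat.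
      by rewrite ltcR.
    have [dh Dh] := Hd _ hw.
    exact: psi_der pB pN dh Dh.
  have := @MVT_segment R psi (fun _ => 0) 0 1 ler01.
  case.
  - move=> t; rewrite in_itv /= => /andP[t0 t1]; apply: der.
    by rewrite ger0_norm ?ltW // (lt_trans t1).
  - apply: continuous_in_subspaceT => t; rewrite inE /= in_itv /= => /andP[t0 t1].
    have := der t; rewrite ger0_norm // => /(_ (le_lt_trans t1 one2)) [dt _].
    exact/differentiable_continuous/derivable1_diffP.
  move=> t _; rewrite mul0r => /eqP; rewrite subr_eq0 => /eqP.
  by rewrite /psi mul1r mul0r addr0 /c addrC subrK.
apply/eqP; rewrite eq_complex; apply/andP; split; apply/eqP; apply: Hp.
- by case=> ? ? [? ?].
- by case=> a b; rewrite normc_def /= lecR nc_geRe.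
- by case=> ? ? [? ?].
- by case=> a b; rewrite normc_def /= lecR nc_geIm.
Qed.

Lemma nbhs_of (R : realType) (z : R[i]^o) (e : R[i]) : 0 < e ->
  nbhs z [set w | `|w - z| < e]%classic.
Proof.
move=> e0. apply: (@nbhs_norm_le_nbhs _ (R[i]^o)). exists e => // w /=.
by rewrite distrC.
Qed.
Lemma open_ball (R : realType) (U : set R[i]^o) (z : R[i]^o) : open U -> U z ->
  exists2 r : R[i], 0 < r & forall w, `|w - z| < r -> U w.
Proof.
rewrite openE => oU Uz; have : nbhs z U := oU z Uz.
move/(@nbhs_le_nbhs_norm _ (R[i]^o)) => [e e0 He]; exists e => // w hw.
by apply: He; rewrite /= distrC.
Qed.

Lemma conn_cst (R : realType) (U : set R[i]^o) (h : R[i]^o -> R[i]^o) :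
  open U -> connected U ->
  (forall w, U w -> derivable h w 1 /\ 'D_1 h w = 0) ->
  forall x y, U x -> U y -> h x = h y.
Proof.
move=> oU cU Hd x y Ux Uy.
have loc : forall z, U z -> exists2 r : R[i], 0 < r &
    forall w, `|w - z| < r -> U w /\ h w = h z.
  move=> z Uz; have [r r0 Hr] := @open_ball _ _ _ oU Uz.
  exists (r / 2%:R); first by rewrite divr_gt0 // ltr0n.
  move=> w hw; split.
    apply: Hr; apply: lt_trans hw _.
    by rewrite ltr_pdivrMr ?ltr0n // ltr_pMr // ltr1n.
  apply: (@loc_cst _ h z r r0 _ w hw) => v hv; exact: Hd (Hr _ hv).
pose B := [set w | U w /\ h w = h x]%classic.
suff BU : B = U by have [_ ->] : B y by rewrite BU.
apply: cU.
- by exists x.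
- exists [set w | exists2 r : R[i], 0 < r & forall v, `|v - w| < r -> U v /\ h v = h x]%classic.
    rewrite openE => w [r r0 Hr].
    apply: (filterS _ (@nbhs_of _ w _ (divr_gt0 r0 (ltr0n _ 2)))).
    move=> v hv; exists (r / 2%:R); first by rewrite divr_gt0 // ltr0n.
    move=> u hu; apply: Hr.
    rewrite -(subrK v u) -addrA (splitr r).
    apply: le_lt_trans (ler_normD _ _) _.
    by rewrite ltrD.
  apply/seteqP; split => w /=.
    move=> [Uw hw]; split => //.
    have [r r0 Hr] := loc w Uw; exists r => // v /Hr [Uv ->]; split => //.
  by move=> [Uw [r r0 /(_ w)]]; rewrite subrr normr0 => /(_ r0).
- exists (closure B); first exact: closed_closure.
  apply/seteqP; split => w /=.
    by move=> Bw; split; [case: Bw|apply: subset_closure].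
  move=> [Uw cw]; have [r r0 Hr] := loc w Uw.
  have [v [[Uv hv] /Hr [_ hvw]]] := cw _ (@nbhs_of _ w _ r0).
  by split => //; rewrite -hvw.
Qed.

Theorem theorem5p3 (R : realType) (U : set R[i]^o) (L f : R[i]^o -> R[i]^o) :
  cdomain U -> ~ U 0 -> log_branch U L ->
  (forall x, U x -> cdiff f x) -> (forall x, U x -> f x != 0) ->
  ((forall x, U x -> dual_logderiv f x = f x) <->
   exists a : R[i], (forall x, U x -> a - L x != 0) /\
                    (forall x, U x -> f x = (a - L x)^-1)).
Proof.
move=> [oU [cU [x0 Ux0]]] _ [dLU eL] df fn0.
have LD : forall x, U x -> x * 'D_1 L x = 1.
  move=> x Ux; have [r r0 Hr] := @open_ball _ _ _ oU Ux.
  apply: (@dL _ L x r (dLU x Ux) r0) => y /Hr; exact: eL.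
have xn0 : forall x, U x -> x != 0.
  move=> x /LD; apply: contra_eqN => /eqP ->; rewrite mul0r eq_sym oner_eq0.
  done.
split.
- move=> Hf.
  pose g := (fun y : R[i]^o => (f y)^-1).
  have Hd : forall w, U w -> derivable (g + L) w 1 /\ 'D_1 (g + L) w = 0.
    move=> w Uw; have dfw : derivable f w 1 := df w Uw.
    have dg : derivable g w 1 := derivableV (fn0 w Uw) dfw.
    split; first exact: derivableD dg (dLU w Uw).
    rewrite (@deriveD _ _ _ g L w 1 dg (dLU w Uw)).
    rewrite /g (@deriveV _ _ f w 1 (fn0 w Uw) dfw).
    have := Hf w Uw; rewrite /dual_logderiv derive1E => H1.
    have H2 := LD w Uw; have w0 := xn0 w Uw; have F0 := fn0 w Uw.
    move: H1 H2; set D := 'D_1 f w; set lw := 'D_1 L w; set F := f w => H1 H2.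
    have wD : w * D = F ^+ 2 by rewrite expr2 -{1}H1 divfK.
    have lwE : lw = w^-1 by apply: (mulfI w0); rewrite H2 divff.
    have DE : D = F ^+ 2 / w by rewrite -wD [w * D]mulrC mulfK.
    have -> : - F ^- 2 *: D = - (F ^- 2 * D) by rewrite -mulNr.
    by rewrite DE mulrA mulVf ?expf_neq0 // mul1r lwE addNr.
  have cst := @conn_cst _ U (g + L) oU cU Hd.
  exists ((g + L) x0).
  have key : forall x, U x -> (f x)^-1 = (g + L) x0 - L x.
    by move=> x Ux; rewrite -(cst x x0 Ux Ux0) /= addrK.
  split => x Ux; rewrite -key //.
    by rewrite invr_neq0 // fn0.
  by rewrite invrK.
- case=> a [an0 fE] x Ux.
  rewrite /dual_logderiv derive1E.
  pose gg := ((cst a : R[i]^o -> R[i]^o) - L : R[i]^o -> R[i]^o).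
  have [r r0 Hr] := @open_ball _ _ _ oU Ux.
  have nearE : (\near x, f x = (fun y => (gg y)^-1) x).
    apply: (@filterS _ _ _ [set w | `|w - x| < r]%classic).
      by move=> w /Hr /fE.
    exact: nbhs_of.
  rewrite (near_eq_derive _ nearE).
  have dc : derivable (cst a : R[i]^o -> R[i]^o) x 1 by exact: derivable_cst.
  have dgg : derivable gg x 1 := derivableB dc (dLU x Ux).
  have A0 := an0 x Ux.
  rewrite (@deriveV _ _ gg x 1 A0 dgg).
  rewrite /gg (@deriveB _ _ _ _ L x 1 dc (dLU x Ux)).
  rewrite derive_cst fE //.
  have -> : (cst a - L) x = a - L x by [].
  have H2 := LD x Ux; have x0n := xn0 x Ux.
  move: H2; set lw := 'D_1 L x => H2.
  have lwE : lw = x^-1 by apply: (mulfI x0n); rewrite H2 divff.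
  rewrite lwE; set A := a - L x.
  have -> : - A ^- 2 *: (0 - x^-1) = A ^- 2 * x^-1 by rewrite sub0r; exact: mulrNN.
  rewrite invrK mulrCA divff // mulr1 expr2 invfM -mulrA mulVf // mulr1.
  done.
Qed.
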